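(* Let $n\ge3$, $0<\epsilon<1$, and define $\alpha,\beta,\gamma,\delta$ and the polynomial $Q(\rho)$ as in the context. If $\epsilon>0$ is sufficiently small, then: (1) $Q(1) = Q'(1) = 0$ and $Q''(1) = 2$; (2) $Q(\epsilon) = 0$ and $Q'(\epsilon) = \epsilon^{n-2}(1-\epsilon)$.
   Context: $D(\epsilon) = -n\epsilon^{n+2} + (n+2)\epsilon^{n+1} + n - (n+2)\epsilon$, $N(\epsilon) = -n\epsilon^{n+1} + (n+1)\epsilon^n - 1$, $K(\epsilon) = -1 + \frac{n+1}{n-1}\epsilon - \epsilon^{n-1} + \frac{n-3}{n-1}\epsilon^n$, $M(\epsilon) = \frac{\epsilon^{n+1}-1}{n(n+1)} + \frac{\epsilon-\epsilon^n}{n(n-1)}$; $\delta = \Big(\epsilon^{n-2}(1-\epsilon) - \frac{(n+2)N K}{D} + \frac{n(n-3)}{n-1}\epsilon^{n-1} - (n-1)\epsilon^{n-2} + \frac{n+1}{n-1}\Big)\Big(\frac{(n+2)N}{D}M + \frac{-(n-1)\epsilon^n + n\epsilon^{n-1}-1}{n(n-1)}\Big)^{-1}$, $\gamma = n(n+1)(n+2)(M\delta + K)/D$, $\alpha = -1 - \frac{\delta}{n(n+1)} - \frac{\gamma}{(n+1)(n+2)}$, $\beta = \frac{n+1}{n-1} + \frac{\delta}{n(n-1)} + \frac{\gamma}{n(n+1)}$ (denominators are nonzero for small $\epsilon$); $P(\rho) = -\frac{2n+\delta}{n(n-1)} + \frac{(\delta-\gamma)\rho}{n(n+1)} + \frac{\gamma\rho^2}{(n+1)(n+2)}$,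 $Q(\rho) = \rho^{n-1} - \rho^n - \rho^nP(\rho) - \alpha - \beta\rho$. *)

(* Defs.v *)
From HB Require Import structures.
From mathcomp Require Import all_boot all_order all_algebra.
Set Implicit Arguments. Unset Strict Implicit. Unset Printing Implicit Defensive.
Import Order.TTheory GRing.Theory Num.Theory.
Local Open Scope ring_scope.

Section Lemma47Defs.
Variables (R : realFieldType) (n : nat) (e : R).

Definition nR : R := n%:R.

Definition Dd : R :=
  - nR * e ^+ n.+2 + (nR + 2) * e ^+ n.+1 + nR - (nR + 2) * e.
Definition Nn : R := - nR * e ^+ n.+1 + (nR + 1) * e ^+ n - 1.
Definition Kk : R :=
  -1 + (nR + 1) / (nR - 1) * e - e ^+ n.-1 + (nR - 3) / (nR - 1) * e ^+ n.
Definition Mm : R :=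
  (e ^+ n.+1 - 1) / (nR * (nR + 1)) + (e - e ^+ n) / (nR * (nR - 1)).

Definition delta : R :=
  (e ^+ (n - 2) * (1 - e) - (nR + 2) * Nn * Kk / Dd
     + nR * (nR - 3) / (nR - 1) * e ^+ n.-1 - (nR - 1) * e ^+ (n - 2)
     + (nR + 1) / (nR - 1))
  * ((nR + 2) * Nn / Dd * Mm
     + (- (nR - 1) * e ^+ n + nR * e ^+ n.-1 - 1) / (nR * (nR - 1)))^-1.

Definition gamma : R :=
  nR * (nR + 1) * (nR + 2) * (Mm * delta + Kk) / Dd.

Definition alpha : R :=
  -1 - delta / (nR * (nR + 1)) - gamma / ((nR + 1) * (nR + 2)).

Definition beta : R :=
  (nR + 1) / (nR - 1) + delta / (nR * (nR - 1)) + gamma / (nR * (nR + 1)).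

Definition Ppoly : {poly R} :=
  (- (2 * nR + delta) / (nR * (nR - 1)))%:P
  + ((delta - gamma) / (nR * (nR + 1))) *: 'X
  + (gamma / ((nR + 1) * (nR + 2))) *: 'X^2.

Definition Qpoly : {poly R} :=
  'X^(n.-1) - 'X^n - 'X^n * Ppoly - alpha%:P - beta *: 'X.

End Lemma47Defs.

(* Main.v *)
Require Import Defs.
From HB Require Import structures.
From mathcomp Require Import all_boot all_order all_algebra ring lra.
Import Order.TTheory GRing.Theory Num.Theory.
Local Open Scope ring_scope.

Ltac hsimp := rewrite ?(hornerMn, hornerD, hornerN, hornerXn, hornerZ, hornerX, hornerC, hornerM, hornerMX).

Definition Qg (R : realFieldType) (n : nat) (p0 p1 p2 a b : R) : {poly R} :=
  'X^(n.-1) - 'X^n - 'X^n * (p0%:P + p1 *: 'X + p2 *: 'X^2) - a%:P - b *: 'X.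

Arguments Qg {R}.
Lemma QgE (R : realFieldType) n (e : R) : Qpoly n e =
  Qg n (- (2 * nR R n + delta n e) / (nR R n * (nR R n - 1)))
   ((delta n e - gamma n e) / (nR R n * (nR R n + 1)))
   (gamma n e / ((nR R n + 1) * (nR R n + 2))) (alpha n e) (beta n e).
Proof. by []. Qed.

Section H.
Variables (R : realFieldType) (n : nat) (p0 p1 p2 a b r : R).
Lemma hQ0 : (Qg n p0 p1 p2 a b).[r] = r^+n.-1 - r^+n - r^+n*(p0 + p1 * r + p2 * r^+2) - a - b * r.
Proof. by rewrite /Qg; hsimp. Qed.
Lemma hQ1 : ((Qg n p0 p1 p2 a b)^`()).[r] = r^+n.-2 * n.-1%:R - r^+n.-1 * n%:R
   - (r^+n.-1 * n%:R * (p0 + p1 * r + p2 * r^+2) + r^+n*(p1 + p2*(r + r))) - b.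
Proof. by rewrite /Qg !derivE; hsimp; rewrite !(mul0r, mulr0, mul1r, mulr1, add0r, addr0, subr0) !mulr_natr. Qed.
Lemma hQ2 : ((Qg n p0 p1 p2 a b)^`(2)).[r] = r ^+ n.-1.-2 * n.-2%:R * n.-1%:R - r ^+ n.-2 * n.-1%:R * n%:R -
  (r ^+ n.-2 * n.-1%:R * n%:R * (p0 + p1 * r + p2 * r ^+ 2) +
   r ^+ n.-1 * n%:R * (p1 + p2 * (r + r)) +
   (r ^+ n.-1 * n%:R * (p1 + p2 * (r + r)) +
    r ^+ n * (p2 * (1 + 1)))).
Proof. by rewrite /Qg !derivnS derivn0 !derivE; hsimp; rewrite !(mul0r, mulr0, mul1r, mulr1, add0r, addr0, subr0) !mulr_natr. Qed.
End H.

Definition G' (R : realFieldType) (N e y : R) :=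
     (N + 2) * (- N * (y * e ^+ 3) + (N + 1) * (y * e ^+ 2) - 1) *
      ((y * e ^+ 3 - 1) * (N - 1) + (e - y * e ^+ 2) * (N + 1)) +
      (- (N - 1) * (y * e ^+ 2) + N * (y * e) - 1) *
      ((- N * (y * e ^+ 4) + (N + 2) * (y * e ^+ 3) + N - (N + 2) * e) *
       (N + 1)).

Arguments G' {R}.
Lemma G_neg (R : realFieldType) (N e y : R) :
  3 <= N -> 0 < e -> e * (4 + 9*N + 8*N^+2 + 4*N^+3) < 1 -> e <= 1 -> 0 <= y -> y <= e ->
  G' N e y < 0.
Proof.
move=> hN he hC he1 hy hye.
have -> : G' N e y = -2 + y*e*(4*e+3*N*e+N^+2+5*N^+2*e^+2+N^+3+3*N^+3*e^+2)
   + y^+2*e^+5*(2*N+N*e+2*N^+2)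
   - (y*(2*N*e^+3 + N*e^+4 + 4*N^+2*e^+2 + 2*N^+2*e^+4 + 3*N^+3*e^+2 + N^+3*e^+4)
      + y^+2*(2*e^+4 + 3*N*e^+4 + N^+2*e^+4 + N^+2*e^+6)).
  by rewrite /G'; ring.
have hN0 : 0 <= N by lra.
have he0 : 0 <= e by lra.
have hneg : 0 <= y*(2*N*e^+3 + N*e^+4 + 4*N^+2*e^+2 + 2*N^+2*e^+4 + 3*N^+3*e^+2 + N^+3*e^+4)
      + y^+2*(2*e^+4 + 3*N*e^+4 + N^+2*e^+4 + N^+2*e^+6).
  by apply: addr_ge0; apply: mulr_ge0 => //; rewrite ?exprn_ge0 //;
     rewrite ?addr_ge0 // ?mulr_ge0 // ?exprn_ge0.
have e2 : e^+2 <= 1 by rewrite expr_le1.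
have e4 : e^+4 <= 1 by rewrite expr_le1.
have hA : 4*e+3*N*e+N^+2+5*N^+2*e^+2+N^+3+3*N^+3*e^+2 <= 4 + 6*N + 6*N^+2 + 4*N^+3.
  have h1 : N*e <= N by rewrite ler_piMr.
  have h2 : N^+2*e^+2 <= N^+2 by rewrite ler_piMr // exprn_ge0.
  have h3 : N^+3*e^+2 <= N^+3 by rewrite ler_piMr // exprn_ge0.
  have hN3 : 0 <= N^+3 by rewrite exprn_ge0.
  lra.
have hB : y*e^+4*(2*N+N*e+2*N^+2) <= 3*N + 2*N^+2.
  have h1 : N*e <= N by rewrite ler_piMr.
  have hy1 : y*e^+4 <= 1.
    have : y <= 1 by lra.
    move=> hy1; rewrite -[1]mulr1; apply: ler_pM => //; exact: exprn_ge0.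
  have hB0 : 0 <= 2*N+N*e+2*N^+2 by rewrite !addr_ge0 // ?mulr_ge0 // exprn_ge0.
  apply: (le_trans (ler_piMl hB0 hy1)) .
  have hN2 : 0 <= N^+2 by rewrite exprn_ge0.
  lra.
have -> : y^+2*e^+5*(2*N+N*e+2*N^+2) = y*e*(y*e^+4*(2*N+N*e+2*N^+2)) by ring.
have hye1 : y*e <= e by rewrite ler_piMl // ; lra.
have hS : y*e*(4*e+3*N*e+N^+2+5*N^+2*e^+2+N^+3+3*N^+3*e^+2) + y*e*(y*e^+4*(2*N+N*e+2*N^+2))
      <= e * (4 + 9*N + 8*N^+2 + 4*N^+3).
  rewrite -mulrDr.
  have hye0 : 0 <= y*e by rewrite mulr_ge0.
  have hsum : (4*e+3*N*e+N^+2+5*N^+2*e^+2+N^+3+3*N^+3*e^+2) + y*e^+4*(2*N+N*e+2*N^+2)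
       <= 4 + 9*N + 8*N^+2 + 4*N^+3 by lra.
  apply: (le_trans (ler_wpM2l hye0 hsum)).
  apply: ler_wpM2r => //.
  have hN2 : 0 <= N^+2 by rewrite exprn_ge0.
  have hN3 : 0 <= N^+3 by rewrite exprn_ge0.
  lra.
lra.
Qed.

Section K.
Variables (R : realFieldType) (N e y : R).
Definition D' := - N * (y*e^+4) + (N + 2) * (y*e^+3) + N - (N + 2) * e.
Definition N' := - N * (y*e^+3) + (N + 1) * (y*e^+2) - 1.
Definition K' := -1 + (N + 1) / (N - 1) * e - (y*e) + (N - 3) / (N - 1) * (y*e^+2).
Definition M' := ((y*e^+3) - 1) / (N * (N + 1)) + (e - (y*e^+2)) / (N * (N - 1)).
Definition den' := ((N + 2) * N' / D' * M'
     + (- (N - 1) * (y*e^+2) + N * (y*e) - 1) / (N * (N - 1))).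
Definition num' := (y * (1 - e) - (N + 2) * N' * K' / D'
     + N * (N - 3) / (N - 1) * (y*e) - (N - 1) * y + (N + 1) / (N - 1)).
End K.
Arguments D' {R}. Arguments N' {R}. Arguments K' {R}. Arguments M' {R}. Arguments den' {R}. Arguments num' {R}.



Theorem lemma4p7 (R : realFieldType) (n : nat) (hn : (3 <= n)%N) :
  exists eps0 : R, 0 < eps0 /\
    forall e : R, 0 < e -> e < eps0 -> e < 1 ->
      [/\ (Qpoly n e).[1] = 0,
          ((Qpoly n e)^`()).[1] = 0,
          ((Qpoly n e)^`(2)).[1] = 2,
          (Qpoly n e).[e] = 0
        & ((Qpoly n e)^`()).[e] = e ^+ (n - 2) * (1 - e)].
Proof.
case: n hn => [|[|[|m]]] // _.
have n1 : (m.+2)%:R = nR R m.+3 - 1 by rewrite /nR !mulrSr; ring.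
have n2 : (m.+1)%:R = nR R m.+3 - 2 by rewrite /nR !mulrSr; ring.
have n0 : (m.+3)%:R = nR R m.+3 by [].
have hN3 : 3 <= nR R m.+3 by rewrite /nR ler_nat.
exists (4 + 9*nR R m.+3 + 8*(nR R m.+3)^+2 + 4*(nR R m.+3)^+3)^-1.
split.
  have : 0 <= (nR R m.+3)^+2 by rewrite exprn_ge0.
  have : 0 <= (nR R m.+3)^+3 by rewrite exprn_ge0.
  move=> *; rewrite invr_gt0; lra.
move=> e he heC he1.
pose y := e^+m.+1.
have P1 : e^+m.+2 = y * e by rewrite /y exprSr.
have P2 : e^+m.+3 = y * e^+2 by rewrite /y -exprD addn2.
have P3 : e^+m.+4 = y * e^+3 by rewrite /y -exprD addn3.
have P4 : e^+m.+4.+1 = y * e^+4 by rewrite /y -exprD addn4.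
have hd : delta m.+3 e = num' (nR R m.+3) e y * (den' (nR R m.+3) e y)^-1.
  rewrite /delta /num' /den' /Dd /Nn /Kk /Mm /N' /K' /M' /D'.
  by rewrite P1 P2 P3 P4.
have hg : gamma m.+3 e = nR R m.+3 * (nR R m.+3 + 1) * (nR R m.+3 + 2)
     * (M' (nR R m.+3) e y * delta m.+3 e + K' (nR R m.+3) e y) / D' (nR R m.+3) e y.
  rewrite /gamma /Dd /Kk /Mm /K' /M' /D'.
  by rewrite P1 P2 P3 P4.
rewrite !QgE /alpha /beta.
move: (delta m.+3 e) (gamma m.+3 e) hd hg => dl gm hd hg.
rewrite !hQ0 !hQ1 !hQ2.
rewrite ?n1 ?n2 ?n0.
rewrite ?P1 ?P2 ?P3 ?P4.
rewrite (_ : e ^+ (m.+3 - 2) = y) // !expr1n.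
have hy0 : 0 <= y by rewrite exprn_ge0 // ltW.
have hye : y <= e.
  rewrite /y exprSr; apply: ler_piMl; first exact: ltW.
  apply: exprn_ile1; [exact: ltW | exact: ltW].
clear P1 P2 P3 P4; clearbody y.
move: (nR R m.+3) hN3 heC hd hg => N hN3 heC hd hg.
have hN0 : 0 <= N by lra.
have hC0 : 0 < 4 + 9*N + 8*N^+2 + 4*N^+3.
  have : 0 <= N^+2 by rewrite exprn_ge0.
  have : 0 <= N^+3 by rewrite exprn_ge0.
  lra.
have heC' : e * (4 + 9*N + 8*N^+2 + 4*N^+3) < 1 by rewrite -ltr_pdivlMr // mul1r.
have Nn0 : N != 0 by rewrite gt_eqF //; lra.
have Nn1 : N - 1 != 0 by rewrite gt_eqF //; lra.
have Nn2 : N + 1 != 0 by rewrite gt_eqF //; lra.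
have Nn3 : N + 2 != 0 by rewrite gt_eqF //; lra.
have hG : G' N e y < 0 by apply: G_neg => //; lra.
have hD : 0 < D' N e y.
  rewrite /D'.
  have h1 : 0 <= y * e^+3 * ((N + 2) - N * e).
    rewrite mulr_ge0 // ?mulr_ge0 // ?exprn_ge0 //; try lra.
    have : N * e <= N by rewrite ler_piMr //; lra.
    lra.
  have h2 : (N + 2) * e < N.
    have : e * (4 + 9*N + 8*N^+2 + 4*N^+3) = 4 * e + 9 * N * e + 8 * N^+2 * e + 4 * N^+3 * e by ring.
    have : 0 <= N^+2 * e by rewrite mulr_ge0 ?exprn_ge0 //; lra.
    have : 0 <= N^+3 * e by rewrite mulr_ge0 ?exprn_ge0 //; lra.
    lra.
  have -> : - N * (y * e ^+ 4) + (N + 2) * (y * e ^+ 3) + N - (N + 2) * e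
     = y * e^+3 * ((N + 2) - N * e) + (N - (N + 2) * e) by ring.
  lra.
have hDn : D' N e y != 0 by rewrite gt_eqF.
have hGn : G' N e y != 0 by rewrite lt_eqF.
split.
- field. by rewrite Nn0 Nn1 Nn2 Nn3.
- field. by rewrite Nn0 Nn1 Nn2 Nn3.
- field. by rewrite Nn0 Nn1 Nn2 Nn3.
- rewrite hg hd. move: hDn hGn. rewrite /G' /D' /num' /den' /N' /K' /M' => hDn hGn.
  rewrite /D'; field. by rewrite Nn0 Nn1 Nn2 Nn3 hDn hGn.
- rewrite hg hd. move: hDn hGn. rewrite /G' /D' /num' /den' /N' /K' /M' => hDn hGn.
  rewrite /D'; field. by rewrite Nn0 Nn1 Nn2 Nn3 hDn hGn.
Qed.
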